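(* Let $\ell\in\{1,2\}$. For each wavenumber $k>0$ let ${\cal H}\subset{\cal H}_0$, $a_\ell=a_\ell^{(k)}$, $C_{{\rm G1},\ell}$, $C_{{\rm G2},\ell}$, ${\mathcal A}_\ell={\mathcal A}_\ell^{(k)}$ be as in the context (the standing assumptions there hold), with ${\mathcal A}_\ell$ invertible. Suppose that given $k_0>0$ there exists $c>0$ such that $\|{\mathcal A}_\ell^{-1}\|_{{\cal H}_0\to{\cal H}}\ge c$ for all $k\ge k_0$. Given $p\in\mathbb{Z}^+$, let $({\cal H}_h)_{h>0}$ be a family of finite-dimensional subspaces of ${\cal H}$, and let $\Pi_h:{\cal H}\to{\cal H}_h$ be the ${\cal H}$-orthogonal projection. Suppose there exist $C_1,C_2,C_3>0$ such that, whenever $(kh)^{2p}\|{\mathcal A}_\ell^{-1}\|_{{\cal H}_0\to{\cal H}}\le C_1$, the following hold: for all $u\in{\cal H}$ and $u_h\in{\cal H}_h$ satisfying $a_\ell(u-u_h,v_h)=0$ for all $v_h\in{\cal H}_h$, $$\|u-u_h\|_{{\cal H}}\le C_2\Big(1+(kh)^p\|{\mathcal A}_\ell^{-1}\|_{{\cal H}_0\to{\cal H}}\Big)\|(I-\Pi_h)u\|_{{\cal H}},$$ and $$\|(I-\Pi_h){\mathcal A}_\ell^{-1}\|_{{\cal H}_0\to{\cal H}}\le C_3\Big(kh+(kh)^p\|{\mathcal A}_\ell^{-1}\|_{{\cal H}_0\to{\cal H}}\Big).$$ Then, given $0<\varepsilon\le C_1$, there exists $C_4>0$ such that if $(kh)^{2p}\|{\mathcal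 A}_\ell^{-1}\|_{{\cal H}_0\to{\cal H}}\le\varepsilon$ (and $k\ge k_0$), then $$\inf_{u_h\in{\cal H}_h\setminus\{0\}}\sup_{v_h\in{\cal H}_h\setminus\{0\}}\frac{|a_\ell(u_h,v_h)|}{\|u_h\|_{{\cal H}}\|v_h\|_{{\cal H}}}\ge\frac{1}{(C_{{\rm G1},\ell})^{-1}\Big(1+C_{{\rm G2},\ell}(1+C_2C_3C_4)\|{\mathcal A}_\ell^{-1}\|_{{\cal H}_0\to{\cal H}}\Big)}.$$
   Context: Standing assumptions: ${\cal H}\subset{\cal H}_0$ are complex Hilbert spaces with $\|v\|_{{\cal H}_0}\le\|v\|_{{\cal H}}$ for $v\in{\cal H}$, and ${\cal H}_0$ is identified with its dual so that ${\cal H}\subset{\cal H}_0\subset{\cal H}^*$. ${\mathcal D}:{\cal H}\to{\cal H}_0$ is linear with $\|{\mathcal D}\|_{{\cal H}\to{\cal H}_0}\le 1$; $b(\cdot,\cdot)$ is a continuous sesquilinear form on ${\cal H}$; for $\ell=1,2$, $\mu_\ell^{-1}:{\cal H}_0\to{\cal H}_0$ and $\epsilon_\ell:{\cal H}_0\to{\cal H}_0$ are bounded linear operators, and $a_\ell(u,v):=(\mu_\ell^{-1}{\mathcal D}u,{\mathcal D}v)_{{\cal H}_0}+b(u,v)-(\epsilon_\ell u,v)_{{\cal H}_0}$ (these objects may depend on the parameter $k$). For $\ell=1,2$ there exist $C_{{\rm G1},\ell},C_{{\rm G2},\ell}>0$ with $|a_\ell(v,v)+C_{{\rm G2},\ell}\|v\|_{{\cal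 H}_0}^2|\ge C_{{\rm G1},\ell}\|v\|_{{\cal H}}^2$ for all $v\in{\cal H}$. ${\mathcal A}_\ell:{\cal H}\to{\cal H}^*$ is defined by $\langle{\mathcal A}_\ell u,v\rangle_{{\cal H}^*\times{\cal H}}=a_\ell(u,v)$, and $\|{\mathcal A}_\ell^{-1}\|_{{\cal H}_0\to{\cal H}}$ is the norm of ${\mathcal A}_\ell^{-1}$ restricted to ${\cal H}_0\subset{\cal H}^*$ as a map into ${\cal H}$. *)

(* Defs.v *)
From HB Require Import structures.
From mathcomp Require Import all_boot all_order all_algebra.
From mathcomp Require Import complex.
From mathcomp Require Import boolp classical_sets reals.
Set Implicit Arguments. Unset Strict Implicit. Unset Printing Implicit Defensive.
Import Order.TTheory GRing.Theory Num.Theory.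
Local Open Scope ring_scope.
Local Open Scope classical_set_scope.

Section Defs.
Variable R : realType.
Local Notation C := (R[i]).

Definition cabs (z : C) : R := Num.sqrt (complex.Re z ^+ 2 + complex.Im z ^+ 2).
Definition cconj (z : C) : C := conjc z.

Definition ipnorm (V : lmodType C) (ip : V -> V -> C) (u : V) : R :=
  Num.sqrt (complex.Re (ip u u)).

Definition inner_product (V : lmodType C) (ip : V -> V -> C) : Prop :=
  [/\ forall u v w, ip (u + v) w = ip u w + ip v w,
      forall (c : C) u w, ip (c *: u) w = c * ip u w,
      forall u v, ip v u = cconj (ip u v),
      forall u, 0 <= ip u u &
      forall u, ip u u = 0 -> u = 0].

Definition ip_complete (V : lmodType C) (ip : V -> V -> C) : Prop :=
  forall s : nat -> V,
    (forall e : R, 0 < e -> exists N, forall m n, (N <= m)%N -> (N <= n)%N ->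
        ipnorm ip (s m - s n) < e) ->
    exists l : V, forall e : R, 0 < e -> exists N, forall n, (N <= n)%N ->
        ipnorm ip (s n - l) < e.

Record hilbert := Hilbert {
  hspace :> lmodType C;
  hip : hspace -> hspace -> C;
  hip_inner : inner_product hip;
  hip_complete : ip_complete hip }.

Definition hnorm (X : hilbert) (u : X) : R := ipnorm (@hip X) u.

Definition linear_map (X Y : lmodType C) (T : X -> Y) : Prop :=
  forall (c : C) u v, T (c *: u + v) = c *: T u + T v.

Definition bounded_op (X Y : hilbert) (T : X -> Y) : Prop :=
  exists M : R, forall u, hnorm (T u) <= M * hnorm u.

(* Standing assumptions of the context, for one fixed value of k *)
Record setting := Setting {
  sH0 : hilbert;
  sH : hilbert;
  emb : sH -> sH0;
  emb_linear : linear_map emb;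
  emb_inj : injective emb;
  emb_norm : forall v, hnorm (emb v) <= hnorm v;
  opD : sH -> sH0;
  opD_linear : linear_map opD;
  opD_norm : forall v, hnorm (opD v) <= hnorm v;
  formb : sH -> sH -> C;
  formb_lin1 : forall (c : C) u u' v, formb (c *: u + u') v = c * formb u v + formb u' v;
  formb_lin2 : forall (c : C) u v v', formb u (c *: v + v') = cconj c * formb u v + formb u v';
  formb_cont : exists M : R, forall u v, cabs (formb u v) <= M * hnorm u * hnorm v;
  opmuinv : sH0 -> sH0;
  opmuinv_linear : linear_map opmuinv;
  opmuinv_bdd : bounded_op opmuinv;
  opeps : sH0 -> sH0;
  opeps_linear : linear_map opeps;
  opeps_bdd : bounded_op opeps }.

Definition forma (S : setting) (u v : sH S) : C :=
  hip (opmuinv (opD u)) (opD v) + formb u v - hip (opeps (emb u)) (emb v).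

Definition garding (S : setting) (CG1 CG2 : R) : Prop :=
  0 < CG1 /\ 0 < CG2 /\
  forall v : sH S, CG1 * hnorm v ^+ 2 <=
     cabs (forma v v + ((CG2 * hnorm (emb v) ^+ 2)%:C)%C).

(* bounded antilinear functionals on H, i.e. elements of H^* *)
Definition antidual (S : setting) (F : sH S -> C) : Prop :=
  (forall (c : C) v v', F (c *: v + v') = cconj c * F v + F v') /\
  exists M : R, forall v, cabs (F v) <= M * hnorm v.

(* A : H -> H^*, <A u, v> = a(u,v), is invertible (bijective, with bounded
   inverse) *)
Definition A_invertible (S : setting) : Prop :=
  (forall F, antidual F -> exists! u : sH S, forall v, forma u v = F v) /\
  exists M : R, forall F (u : sH S) (K : R), antidual F ->
     (forall v, forma u v = F v) ->
     (forall v, cabs (F v) <= K * hnorm v) -> hnorm u <= M * K.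

(* u = A^{-1} f for f in H_0 ⊂ H^* (f acting as v |-> (f, v)_{H0}) *)
Definition solves (S : setting) (f : sH0 S) (u : sH S) : Prop :=
  forall v, forma u v = hip f (emb v).

(* || T A^{-1} ||_{H0 -> H} for T : H -> H *)
Definition opnorm_Ainv (S : setting) (T : sH S -> sH S) : R :=
  sup [set r : R | exists (f : sH0 S) (u : sH S),
         [/\ f != 0, solves f u & r = hnorm (T u) / hnorm f]].

Definition Ainv_norm (S : setting) : R := opnorm_Ainv (@id (sH S)).

Definition subspace (V : lmodType C) (P : set V) : Prop :=
  P 0 /\ forall (c : C) u v, P u -> P v -> P (c *: u + v).

Definition fin_dim_subspace (V : lmodType C) (P : set V) : Prop :=
  subspace P /\ exists (n : nat) (e : 'I_n -> V), (forall i, P (e i)) /\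
    forall v, P v -> exists c : 'I_n -> C, v = \sum_(i < n) c i *: e i.

Definition orth_proj (X : hilbert) (P : set X) (Pi : X -> X) : Prop :=
  forall v, P (Pi v) /\ forall w, P w -> hip (v - Pi v) w = 0.

Definition infsup_inner (S : setting) (P : set (sH S)) (u : sH S) : R :=
  sup [set r : R | exists v, [/\ P v, v != 0 &
         r = cabs (forma u v) / (hnorm u * hnorm v)]].

End Defs.

(* Main.v *)
Require Import Defs.
From HB Require Import structures.
From mathcomp Require Import all_boot all_order all_algebra.
From mathcomp Require Import complex.
From mathcomp Require Import boolp classical_sets reals.
From mathcomp Require Import ring lra.
Import Order.TTheory GRing.Theory Num.Theory.
Local Open Scope ring_scope.
Local Open Scope classical_set_scope.
Set Implicit Arguments. Unset Strict Implicit. Unset Printing Implicit Defensive.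
Local Open Scope complex_scope.

Section CAbs.
Variable R : realType.
Local Notation C := (R[i]).

Lemma cabsE (z : C) : (cabs z)%:C = `|z|.
Proof. by rewrite normc_def. Qed.

Lemma cabs_ge0 (z : C) : 0 <= cabs z.
Proof. by rewrite /cabs sqrtr_ge0. Qed.

Lemma cabs_le (z w : C) : (cabs z <= cabs w) = (`|z| <= `|w|).
Proof. by rewrite -!cabsE lecR. Qed.

Lemma cabsM (z w : C) : cabs (z * w) = cabs z * cabs w.
Proof. apply: complexI; by rewrite rmorphM /= !cabsE normrM. Qed.

Lemma cabsD (z w : C) : cabs (z + w) <= cabs z + cabs w.
Proof. by rewrite -lecR rmorphD /= !cabsE ler_normD. Qed.

Lemma cabsN (z : C) : cabs (- z) = cabs z.
Proof. apply: complexI; by rewrite !cabsE normrN. Qed.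

Lemma cabsB (z w : C) : cabs (z - w) <= cabs z + cabs w.
Proof. by rewrite (le_trans (cabsD _ _)) // cabsN. Qed.

Lemma cabsR (r : R) : cabs r%:C = `|r|.
Proof. by rewrite /cabs /= expr0n /= addr0 sqrtr_sqr. Qed.

Lemma cabsJ (z : C) : cabs (cconj z) = cabs z.
Proof. by case: z => a b; rewrite /cabs /cconj /= sqrrN. Qed.

Lemma Re_le_cabs (z : C) : complex.Re z <= cabs z.
Proof.
case: z => a b; rewrite /cabs /=.
apply: le_trans (ler_norm a) _; rewrite -sqrtr_sqr ler_wsqrtr //.
by rewrite lerDl sqr_ge0.
Qed.

Lemma cabs_eq0 (z : C) : cabs z = 0 -> z = 0.
Proof. move=> h; apply/normr0_eq0; by rewrite -cabsE h. Qed.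

Lemma mulcJ (z : C) : z * cconj z = (cabs z ^+ 2)%:C.
Proof.
case: z => a b; rewrite /cabs /cconj /= sqr_sqrtr ?addr_ge0 ?sqr_ge0 //.
by apply/eqP; rewrite eq_complex /= !expr2; apply/andP; split; apply/eqP; ring.
Qed.
End CAbs.
Section IP.
Variable R : realType.
Local Notation C := (R[i]).
Variable V : lmodType C.
Variable ip : V -> V -> C.
Hypothesis hip : inner_product ip.

Lemma ipD1 u v w : ip (u + v) w = ip u w + ip v w.
Proof. by case: hip => h *; apply: h. Qed.
Lemma ipZ1 c u w : ip (c *: u) w = c * ip u w.
Proof. by case: hip => _ h *; apply: h. Qed.
Lemma ipC u v : ip v u = cconj (ip u v).
Proof. by case: hip => _ _ h *; apply: h. Qed.
Lemma ip_ge0 u : 0 <= ip u u.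
Proof. by case: hip => _ _ _ h *; apply: h. Qed.
Lemma ip_eq0 u : ip u u = 0 -> u = 0.
Proof. by case: hip => _ _ _ _ h; apply: h. Qed.

Lemma ip0l w : ip 0 w = 0.
Proof. by rewrite -(scale0r (0 : V)) ipZ1 mul0r. Qed.
Lemma ipN1 u w : ip (- u) w = - ip u w.
Proof. by rewrite -scaleN1r ipZ1 mulN1r. Qed.
Lemma ipB1 u v w : ip (u - v) w = ip u w - ip v w.
Proof. by rewrite ipD1 ipN1. Qed.
Lemma ipCC u v : conjc (ip u v) = ip v u.
Proof. by rewrite [ip u v]ipC /cconj conjcK. Qed.
Lemma ipD2 u v w : ip u (v + w) = ip u v + ip u w.
Proof. by rewrite ipC ipD1 /cconj rmorphD /= !ipCC. Qed.
Lemma ipZ2 c u v : ip u (c *: v) = cconj c * ip u v.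
Proof. by rewrite ipC ipZ1 /cconj rmorphM /= !ipCC. Qed.
Lemma ip0r u : ip u 0 = 0.
Proof. by rewrite ipC ip0l /cconj conjc0. Qed.
Lemma ipN2 u w : ip u (- w) = - ip u w.
Proof. by rewrite -scaleN1r ipZ2 /cconj rmorphN1 mulN1r. Qed.
Lemma ipB2 u v w : ip u (v - w) = ip u v - ip u w.
Proof. by rewrite ipD2 ipN2. Qed.

Lemma ip_real u : ip u u = (complex.Re (ip u u))%:C.
Proof.
have := ip_ge0 u; rewrite lecE /= => /andP[/eqP h _].
by case: (ip u u) h => a b /= ->.
Qed.

Lemma Re_ip_ge0 u : 0 <= complex.Re (ip u u).
Proof. by have := ip_ge0 u; rewrite lecE /= => /andP[]. Qed.

Lemma ipnorm_ge0 u : 0 <= ipnorm ip u.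
Proof. exact: sqrtr_ge0. Qed.

Lemma ipnorm_sq u : ipnorm ip u ^+ 2 = complex.Re (ip u u).
Proof. by rewrite sqr_sqrtr // Re_ip_ge0. Qed.

Lemma ip_norm u : ip u u = ((ipnorm ip u) ^+ 2)%:C.
Proof. by rewrite ipnorm_sq -ip_real. Qed.

Lemma ipnorm_eq0 u : ipnorm ip u = 0 -> u = 0.
Proof. by move=> h; apply: ip_eq0; rewrite ip_norm h expr0n. Qed.

Lemma ipnorm0 : ipnorm ip 0 = 0.
Proof. by rewrite /ipnorm ip0l /= sqrtr0. Qed.

Lemma cauchy_schwarz u v : cabs (ip u v) <= ipnorm ip u * ipnorm ip v.
Proof.
set z := ip u v; set a := ipnorm ip u; set b := ipnorm ip v.
have ha : 0 <= a := ipnorm_ge0 u. have hb : 0 <= b := ipnorm_ge0 v.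

have key : forall s : R, 0 <= a ^+ 2 - 2 * s * cabs z ^+ 2 + s ^+ 2 * cabs z ^+ 2 * b ^+ 2.
  move=> s; have := ip_ge0 (u - ((s%:C * z) *: v)).
  rewrite !(ipB1, ipB2, ipZ1, ipZ2) !ip_norm -/a -/b -/z [ip v u]ipC -/z.
  rewrite /cconj; move: (cabs_ge0 z); rewrite /cabs.
  case: z => x y /= _; rewrite (sqr_sqrtr (addr_ge0 (sqr_ge0 x) (sqr_ge0 y))).
  rewrite lecE => /andP[_]; simpc => /=.
  set L := (X in _ <= X); set M := (X in _ -> _ <= X).
  suff -> : L = M by [].
  rewrite /L /M; ring.
have hz := cabs_ge0 z.
have [b0|bpos] := eqVneq b 0.
  have [z0|zpos] := eqVneq (cabs z) 0; first by rewrite z0 mulr_ge0.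
  have hz2 : 0 < cabs z ^+ 2 by rewrite exprn_gt0 // lt_def zpos hz.
  have := key ((a ^+ 2 + 1) / (2 * cabs z ^+ 2)).
  rewrite b0 expr0n /= mulr0 addr0.
  have -> : 2 * ((a ^+ 2 + 1) / (2 * cabs z ^+ 2)) * cabs z ^+ 2 = a ^+ 2 + 1.
    by field.
  lra.
have bp : 0 < b by rewrite lt_def bpos hb.
have := key (b ^- 2).
have -> : b ^- 2 ^+ 2 * cabs z ^+ 2 * b ^+ 2 = b ^- 2 * cabs z ^+ 2.
  by field; rewrite gt_eqF.
move=> h.
have h2 : cabs z ^+ 2 <= (a * b) ^+ 2.
  have : cabs z ^+ 2 / b ^+ 2 <= a ^+ 2 by rewrite mulrC; lra.
  by rewrite ler_pdivrMr ?exprn_gt0 // exprMn.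
by rewrite -(@ler_pXn2r _ 2) // ?nnegrE ?mulr_ge0.
Qed.

Lemma ReD (x y : C) : complex.Re (x + y) = complex.Re x + complex.Re y.
Proof. by case: x => ? ?; case: y. Qed.

Lemma sqrt_sq (r : R) : 0 <= r -> Num.sqrt (r ^+ 2) = r.
Proof. by move=> h; rewrite sqrtr_sqr ger0_norm. Qed.

Lemma ipnormD u v : ipnorm ip (u + v) <= ipnorm ip u + ipnorm ip v.
Proof.
have ha := ipnorm_ge0 u; have hb := ipnorm_ge0 v.
rewrite {1}/ipnorm -(sqrt_sq (addr_ge0 ha hb)) ler_wsqrtr //.
rewrite !(ipD1, ipD2) !ReD -!ipnorm_sq.
have h1 := le_trans (Re_le_cabs (ip u v)) (cauchy_schwarz u v).
have h2 := le_trans (Re_le_cabs (ip v u)) (cauchy_schwarz v u).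
nra.
Qed.

Lemma ipnormZ c u : ipnorm ip (c *: u) = cabs c * ipnorm ip u.
Proof.
rewrite /ipnorm ipZ1 ipZ2 mulrA /cconj mulcJ ip_real -rmorphM /=.
rewrite -ipnorm_sq -exprMn sqrtr_sqr ger0_norm; last by rewrite mulr_ge0 ?cabs_ge0 ?ipnorm_ge0.
by rewrite sqrtr_sqr ger0_norm ?ipnorm_ge0.
Qed.

Lemma ipnormN u : ipnorm ip (- u) = ipnorm ip u.
Proof. by rewrite -scaleN1r ipnormZ cabsN (cabsR 1) normr1 mul1r. Qed.

Lemma ipnormB u v : ipnorm ip (u - v) <= ipnorm ip u + ipnorm ip v.
Proof. by rewrite (le_trans (ipnormD _ _)) // ipnormN. Qed.
End IP.
Section FD.
Variable R : realType.
Local Notation C := (R[i]).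
Variable V : lmodType C.

Definition spanF n (e : 'I_n -> V) (v : V) := exists c : 'I_n -> C, v = \sum_(i < n) c i *: e i.
Definition indepF n (e : 'I_n -> V) :=
  forall c : 'I_n -> C, \sum_(i < n) c i *: e i = 0 -> forall i, c i = 0.

Lemma extract_basis n (e : 'I_n -> V) :
  exists m (f : 'I_m -> V), indepF f /\ (forall v, spanF e v <-> spanF f v).
Proof.
elim: n e => [|n IH] e.
  by exists 0%N, e; split => // c _ [].
have [hi|hni] := pselect (indepF e); first by exists n.+1, e.
have [c [hc [i hi]]] : exists c : 'I_n.+1 -> C,
    \sum_(j < n.+1) c j *: e j = 0 /\ exists i, c i != 0.
  apply: contrapT => H; apply: hni => c hc i; apply/eqP; apply: contrapT => hne.
  by apply: H; exists c; split => //; exists i; apply/negP.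
have [m [f [hf hspan]]] := IH (fun k => e (lift i k)).
exists m, f; split => // v; rewrite -hspan; split.
- case=> d ->.
  rewrite (bigD1_ord i) //= in hc; rewrite (bigD1_ord i) //=.
  have ei : e i = - (c i)^-1 *: \sum_(k < n) c (lift i k) *: e (lift i k).
    move/eqP: hc; rewrite addr_eq0 => /eqP hc.
    by rewrite scaleNr -scalerN -hc scalerA mulVf // scale1r.
  exists (fun k => d (lift i k) - d i * (c i)^-1 * c (lift i k)).
  rewrite ei scalerA; symmetry.
  have -> : \sum_(k < n) (d (lift i k) - d i * (c i)^-1 * c (lift i k)) *: e (lift i k)
     = \sum_(k < n) d (lift i k) *: e (lift i k)
       - (d i * (c i)^-1) *: \sum_(k < n) c (lift i k) *: e (lift i k).
    by rewrite scaler_sumr -sumrB; apply: eq_bigr => k _; rewrite scalerBl scalerA.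
  by rewrite addrC mulrN scaleNr.
- case=> d ->.
  exists (fun j => oapp d 0 (unlift i j)).
  rewrite (bigD1_ord i) //= unlift_none scale0r add0r.
  by apply: eq_bigr => k _; rewrite liftK.
Qed.
End FD.
Section FD2.
Variable R : realType.
Local Notation C := (R[i]).
Variable V : lmodType C.
Variable B : V -> V -> C.
Hypothesis hB1 : forall c u u' w, B (c *: u + u') w = c * B u w + B u' w.
Hypothesis hB2 : forall c u v v', B u (c *: v + v') = cconj c * B u v + B u v'.

Lemma dbl0 (x : C) : x = x + x -> x = 0.
Proof. by move=> h; have := congr1 (fun t => t - x) h; rewrite addrK subrr. Qed.

Lemma B0l w : B 0 w = 0.
Proof.
have := hB1 1 0 0 w; rewrite scale1r addr0 mul1r ; exact: dbl0.
Qed.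
Lemma B0r u : B u 0 = 0.
Proof.
have := hB2 1 u 0 0; rewrite scale1r addr0 /cconj conjc1 mul1r ; exact: dbl0.
Qed.
Lemma Bsum1 n (c : 'I_n -> C) (f : 'I_n -> V) w :
  B (\sum_(k < n) c k *: f k) w = \sum_(k < n) c k * B (f k) w.
Proof.
elim/big_rec2: _ => [|k y x _ <-]; first exact: B0l.
by rewrite hB1.
Qed.
Lemma Bsum2 n (c : 'I_n -> C) (f : 'I_n -> V) u :
  B u (\sum_(k < n) c k *: f k) = \sum_(k < n) cconj (c k) * B u (f k).
Proof.
elim/big_rec2: _ => [|k y x _ <-]; first exact: B0r.
by rewrite hB2.
Qed.

Lemma fd_dual (P : set V) n (e : 'I_n -> V) (hP : forall v, P v <-> spanF e v)
  (phi : V -> C) (hphi : forall c v v', phi (c *: v + v') = cconj c * phi v + phi v')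
  (hinj : forall x, P x -> (forall v, P v -> B x v = 0) -> x = 0) :
  exists x, P x /\ forall v, P v -> B x v = phi v.
Proof.
have [m [f [hf hs]]] := extract_basis e.
have hPf : forall v, P v <-> spanF f v by move=> v; rewrite hP hs.
have phisum : forall (d : 'I_m -> C), phi (\sum_(k < m) d k *: f k) =
    \sum_(k < m) cconj (d k) * phi (f k).
  move=> d; elim/big_rec2: _ => [|k y x _ <-]; last by rewrite hphi.
  have := hphi 1 0 0; rewrite scale1r addr0 /cconj conjc1 mul1r ; exact: dbl0.
pose M : 'M[C]_m := \matrix_(i, j) B (f i) (f j).
have key : forall c : 'rV[C]_m, forall j,
    B (\sum_(k < m) c 0 k *: f k) (f j) = (c *m M) 0 j.
  move=> c j; rewrite Bsum1 mxE; apply: eq_bigr => k _; by rewrite mxE.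
have hfree : row_free M.
  rewrite -kermx_eq0; apply/negPn/negP => hK.
  have [i hi] : exists i, row i (kermx M) != 0.
    apply: contrapT => H; apply/(negP hK)/eqP/row_matrixP => i.
    rewrite row0; apply/eqP; apply: contrapT => hn; apply: H; exists i.
    by apply/negP.
  set c := row i (kermx M) in hi.
  have hc : c *m M = 0 by apply/sub_kermxP; exact: row_sub.
  have hx : \sum_(k < m) c 0 k *: f k = 0.
    apply: hinj; first by apply/hPf; exists (fun k => c 0 k).
    move=> v /hPf [d ->]; rewrite Bsum2; apply: big1 => j _.
    by rewrite key hc mxE mulr0.
  apply/(negP hi)/eqP/rowP => k; rewrite mxE.
  by have := hf _ hx k; rewrite !mxE.
have hU : M \in unitmx by rewrite -row_free_unit.
pose pr : 'rV[C]_m := \row_j phi (f j).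
pose c := pr *m invmx M.
have hc : c *m M = pr by rewrite /c mulmxKV.
exists (\sum_(k < m) c 0 k *: f k); split; first by apply/hPf; exists (fun k => c 0 k).
move=> v /hPf [d ->]; rewrite Bsum2 phisum; apply: eq_bigr => j _.
by rewrite key hc mxE.
Qed.
End FD2.
Section Lin.
Variable R : realType.
Local Notation C := (R[i]).

Lemma dbl0V (V : lmodType C) (x : V) : x = x + x -> x = 0.
Proof. by move=> h; have := congr1 (fun t => t - x) h; rewrite addrK subrr. Qed.

Variables (X Y : lmodType C) (T : X -> Y).
Hypothesis hT : linear_map T.
Lemma lin0 : T 0 = 0.
Proof. by apply: dbl0V; have := hT 1 0 0; rewrite scale1r addr0 scale1r. Qed.
Lemma linD u v : T (u + v) = T u + T v.
Proof. by have := hT 1 u v; rewrite !scale1r. Qed.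
Lemma linZ c u : T (c *: u) = c *: T u.
Proof. by have := hT c u 0; rewrite !addr0 lin0 addr0. Qed.
Lemma linN u : T (- u) = - T u.
Proof. by rewrite -scaleN1r linZ scaleN1r. Qed.
Lemma linB u v : T (u - v) = T u - T v.
Proof. by rewrite linD linN. Qed.
End Lin.

Section Sett.
Variable R : realType.
Local Notation C := (R[i]).
Variable S : setting R.

Lemma hnormE (X : hilbert R) (u : X) : hnorm u = ipnorm (@hip _ X) u.
Proof. by []. Qed.

Lemma hnorm_ge0 (X : hilbert R) (u : X) : 0 <= hnorm u.
Proof. exact: sqrtr_ge0. Qed.

Lemma formb0l v : formb (0 : sH S) v = 0.
Proof. by apply: dbl0; have := @formb_lin1 _ S 1 0 0 v; rewrite scale1r addr0 mul1r. Qed.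
Lemma formb0r u : formb u (0 : sH S) = 0.
Proof. by apply: dbl0; have := @formb_lin2 _ S 1 u 0 0; rewrite scale1r addr0 /cconj conjc1 mul1r. Qed.

Lemma forma_lin1 c (u u' w : sH S) :
  forma (c *: u + u') w = c * forma u w + forma u' w.
Proof.
rewrite /forma formb_lin1 (@opD_linear _ S) (@opmuinv_linear _ S) (@emb_linear _ S) (@opeps_linear _ S).
rewrite !(ipD1 (hip_inner _)) !(ipZ1 (hip_inner _)); ring.
Qed.

Lemma forma_lin2 c (u v v' : sH S) :
  forma u (c *: v + v') = cconj c * forma u v + forma u v'.
Proof.
rewrite /forma formb_lin2 (@opD_linear _ S) (@emb_linear _ S).
rewrite !(ipD2 (hip_inner _)) !(ipZ2 (hip_inner _)); ring.
Qed.

Lemma bdd_nonneg (X Y : hilbert R) (T : X -> Y) : bounded_op T ->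
  exists M, 0 <= M /\ forall u, hnorm (T u) <= M * hnorm u.
Proof.
case=> M hM; exists (Num.max M 0); split; first by rewrite le_max lexx orbT.
move=> u; apply: le_trans (hM u) _; apply: ler_wpM2r; first exact: hnorm_ge0.
by rewrite le_max lexx.
Qed.

Lemma forma_bound : exists Ma, 0 <= Ma /\
  forall u v : sH S, cabs (forma u v) <= Ma * hnorm u * hnorm v.
Proof.
have [M1 [hM1 h1]] := bdd_nonneg (@opmuinv_bdd _ S).
have [M2 [hM2 h2]] := bdd_nonneg (@opeps_bdd _ S).
have [M3 h3] := @formb_cont _ S.
exists (M1 + Num.max M3 0 + M2); split.
  by rewrite !addr_ge0 // le_max lexx orbT.
move=> u v; rewrite /forma.
have nu := hnorm_ge0 u; have nv := hnorm_ge0 v.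
have e1 : cabs (hip (opmuinv (opD u)) (opD v)) <= M1 * hnorm u * hnorm v.
  apply: le_trans (cauchy_schwarz (hip_inner _) _ _) _.
  rewrite -!hnormE; apply: ler_pM.
  - exact: hnorm_ge0.
  - exact: hnorm_ge0.
  - apply: le_trans (h1 _) _; apply: ler_wpM2l => //; exact: opD_norm.
  - exact: opD_norm.
have e2 : cabs (hip (opeps (emb u)) (emb v)) <= M2 * hnorm u * hnorm v.
  apply: le_trans (cauchy_schwarz (hip_inner _) _ _) _.
  rewrite -!hnormE; apply: ler_pM.
  - exact: hnorm_ge0.
  - exact: hnorm_ge0.
  - apply: le_trans (h2 _) _; apply: ler_wpM2l => //; exact: emb_norm.
  - exact: emb_norm.
have e3 : cabs (formb u v) <= Num.max M3 0 * hnorm u * hnorm v.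
  apply: le_trans (h3 u v) _; rewrite -!mulrA; apply: ler_wpM2r.
    by rewrite mulr_ge0.
  by rewrite le_max lexx.
apply: le_trans (cabsB _ _) _; apply: le_trans (lerD (cabsD _ _) (lexx _)) _.
rewrite !mulrDl; apply: lerD; first apply: lerD; done.
Qed.
End Sett.
Section HN.
Variable R : realType.
Variable X : hilbert R.
Implicit Types u v : X.
Lemma hnorm0 : hnorm (0 : X) = 0.
Proof. exact: (ipnorm0 (hip_inner X)). Qed.
Lemma hnormN u : hnorm (- u) = hnorm u.
Proof. exact: (ipnormN (hip_inner X)). Qed.
Lemma hnormD u v : hnorm (u + v) <= hnorm u + hnorm v.
Proof. exact: (ipnormD (hip_inner X)). Qed.
Lemma hnormB u v : hnorm (u - v) <= hnorm u + hnorm v.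
Proof. exact: (ipnormB (hip_inner X)). Qed.
Lemma hnormZ c u : hnorm (c *: u) = cabs c * hnorm u.
Proof. exact: (ipnormZ (hip_inner X)). Qed.
Lemma hCS u v : cabs (hip u v) <= hnorm u * hnorm v.
Proof. exact: (cauchy_schwarz (hip_inner X)). Qed.
Lemma hip_norm u : hip u u = ((hnorm u) ^+ 2)%:C.
Proof. exact: (ip_norm (hip_inner X)). Qed.
End HN.
Section Main.
Variable R : realType.
Local Notation C := (R[i]).
Variable S : setting R.
Variables (CG1 CG2 : R).
Hypothesis hG : garding S CG1 CG2.
Hypothesis hA : A_invertible S.
Variable P : set (sH S).
Hypothesis hP : fin_dim_subspace P.
Variable Pi : sH S -> sH S.
Hypothesis hPi : orth_proj P Pi.


Lemma P0 : P 0.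
Proof. by case: hP => -[]. Qed.
Lemma PD c u v : P u -> P v -> P (c *: u + v).
Proof. by case: hP => -[_ h] _; apply: h. Qed.
Lemma PD' u v : P u -> P v -> P (u + v).
Proof. by move=> hu hv; have := PD 1 hu hv; rewrite scale1r. Qed.
Lemma PZ c u : P u -> P (c *: u).
Proof. by move=> hu; have := PD c hu P0; rewrite addr0. Qed.
Lemma PB u v : P u -> P v -> P (u - v).
Proof. by move=> hu hv; apply: PD' => //; rewrite -scaleN1r; apply: PZ. Qed.

Lemma Pspan : exists n (e : 'I_n -> sH S), forall v, P v <-> spanF e v.
Proof.
case: hP => _ [n [e [he hs]]]; exists n, e => v; split; first exact: hs.
case=> c ->; elim/big_rec: _ => [|k y _ hy]; first exact: P0.
by apply: PD.
Qed.

Lemma Pi0 : Pi 0 = 0.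
Proof.
have [h1 h2] := hPi 0.
have := h2 _ h1; rewrite sub0r (ipN1 (hip_inner _)) => /eqP; rewrite oppr_eq0 => /eqP.
exact: (ip_eq0 (hip_inner _)).
Qed.

Lemma hnorm_eq0 (X : hilbert R) (u : X) : hnorm u = 0 -> u = 0.
Proof. rewrite hnormE; exact: (ipnorm_eq0 (hip_inner _)). Qed.

Lemma emb0 : emb (0 : sH S) = 0.
Proof. exact: lin0 (@emb_linear _ S). Qed.

Lemma embnz x : x != 0 -> emb x != 0 :> sH0 S.
Proof. by apply: contraNN => /eqP h; apply/eqP; apply: (@emb_inj _ S); rewrite h emb0. Qed.

Lemma formaB1 (u u' w : sH S) : forma (u - u') w = forma u w - forma u' w.
Proof. by rewrite addrC -scaleN1r forma_lin1 mulN1r addrC. Qed.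

Lemma formaD1 (u u' w : sH S) : forma (u + u') w = forma u w + forma u' w.
Proof. by have := forma_lin1 1 u u' w; rewrite scale1r mul1r. Qed.

Lemma formaZ1 c (u w : sH S) : forma (c *: u) w = c * forma u w.
Proof. by have := forma_lin1 c u 0 w; rewrite addr0 (B0l (@forma_lin1 _ S)) addr0. Qed.

Lemma forma0l (w : sH S) : forma 0 w = 0.
Proof. exact: (B0l (@forma_lin1 _ S)). Qed.

Lemma hinjA (C2 K1 : R)
  (hq : forall u uh, P uh -> (forall vh, P vh -> forma (u - uh) vh = 0) ->
        hnorm (u - uh) <= C2 * K1 * hnorm (u - Pi u)) :
  forall z, P z -> (forall v, P v -> forma z v = 0) -> z = 0.
Proof.
move=> z hz h0.
have := hq 0 z hz; rewrite Pi0 subr0 sub0r.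
rewrite hnormN hnorm0 mulr0.
move=> h; apply: hnorm_eq0; apply: le_anti; rewrite hnorm_ge0 andbT; apply: h.
by move=> vh hvh; rewrite -scaleN1r formaZ1 h0 ?mulr0.
Qed.
End Main.
Section Main2.
Variable R : realType.
Local Notation C := (R[i]).
Variable S : setting R.
Hypothesis hA : A_invertible S.
Variable P : set (sH S).
Variable Pi : sH S -> sH S.
Hypothesis hPi : orth_proj P Pi.

Lemma proj_le u : hnorm (u - Pi u) <= hnorm u.
Proof.
have h : hnorm (u - Pi u) ^+ 2 <= hnorm (u - Pi u) * hnorm u.
  have := hip_norm (u - Pi u).
  have z : hip (u - Pi u) (Pi u) = 0 by have [h1 h2] := hPi u; apply: h2.
  rewrite {2}[u - Pi u]/(u - Pi u) (ipB2 (hip_inner _)) z subr0.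
  move=> e; have := Re_le_cabs (hip (u - Pi u) u); rewrite {1}e /=.
  move=> h1; apply: le_trans h1 _. exact: hCS.
have := hnorm_ge0 (u - Pi u); have := hnorm_ge0 u; nra.
Qed.

Lemma antidual_f (f : sH0 S) : antidual (fun v : sH S => hip f (emb v)).
Proof.
split.
  move=> c v v'; rewrite (@emb_linear _ S) (ipD2 (hip_inner _)) (ipZ2 (hip_inner _)) //.
exists (hnorm f) => v; apply: le_trans (hCS _ _) _.
apply: ler_wpM2l; [exact: hnorm_ge0 | exact: emb_norm].
Qed.

Lemma solve_exists (f : sH0 S) : exists u, solves f u.
Proof.
have [h1 _] := hA; have [u [hu _]] := h1 _ (antidual_f f).
by exists u.
Qed.

Lemma Ainv_bound : exists M : R, forall (f : sH0 S) (u : sH S), solves f u -> hnorm u <= M * hnorm f.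
Proof.
have [_ [M hM]] := hA; exists M => f u hs.
apply: (hM _ u _ (antidual_f f)) => // v.
apply: le_trans (hCS _ _) _.
apply: ler_wpM2l; [exact: hnorm_ge0 | exact: emb_norm].
Qed.

Lemma opnorm_ub (T : sH S -> sH S) (hT : forall u, hnorm (T u) <= hnorm u) f u :
  f != 0 -> solves f u -> hnorm (T u) / hnorm f <= opnorm_Ainv T.
Proof.
move=> hf hs; apply: ub_le_sup; last by exists f, u.
have [M hM] := Ainv_bound; exists M => r [f' [u' [hf' hs' ->]]].
have hp : 0 < hnorm f'.
  rewrite lt_def hnorm_ge0 andbT; apply/eqP => /hnorm_eq0 /eqP; exact/negP.
rewrite ler_pdivrMr //; apply: le_trans (hT _) _; exact: hM.
Qed.
End Main2.
Section Main3.
Variable R : realType.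
Local Notation C := (R[i]).
Variable S : setting R.
Variables (CG1 CG2 : R).
Hypothesis hG : garding S CG1 CG2.
Hypothesis hA : A_invertible S.
Variable P : set (sH S).
Hypothesis hP : fin_dim_subspace P.
Variable Pi : sH S -> sH S.
Hypothesis hPi : orth_proj P Pi.
Variables (C2 C3 K1 K2 D : R).
Hypotheses (hD : 0 <= D).
Hypothesis hq : forall u uh, P uh -> (forall vh, P vh -> forma (u - uh) vh = 0) ->
  hnorm (u - uh) <= C2 * K1 * hnorm (u - Pi u).
Hypothesis ho : opnorm_Ainv (fun u => u - Pi u) <= C3 * K2.
Hypothesis hKD : C2 * K1 * (C3 * K2) <= D * Ainv_norm S.
Hypothesis hC2K1 : 0 <= C2 * K1.

Definition aplus (u v : sH S) : C := forma u v + CG2%:C * hip (emb u) (emb v).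

Lemma aplus_lin1 c u u' w : aplus (c *: u + u') w = c * aplus u w + aplus u' w.
Proof.
rewrite /aplus forma_lin1 (@emb_linear _ S) (ipD1 (hip_inner _)) (ipZ1 (hip_inner _)).
ring.
Qed.

Lemma aplus_lin2 c u v v' : aplus u (c *: v + v') = cconj c * aplus u v + aplus u v'.
Proof.
rewrite /aplus forma_lin2 (@emb_linear _ S) (ipD2 (hip_inner _)) (ipZ2 (hip_inner _)).
ring.
Qed.

Lemma aplus_coer x : CG1 * hnorm x ^+ 2 <= cabs (aplus x x).
Proof.
case: hG => _ [_ h]; apply: le_trans (h x) _.
by rewrite /aplus hip_norm -rmorphM.
Qed.

Lemma main_step uh : P uh -> uh != 0 ->
  1 / ((CG1)^-1 * (1 + CG2 * (1 + D) * Ainv_norm S)) <= infsup_inner P uh.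
Proof.
move=> huh uh0.
have [hG1 [hG2 _]] := hG.
have hinj : forall z, P z -> (forall v, P v -> forma z v = 0) -> z = 0 := hinjA hPi hq.
have [n [e hPe]] := Pspan hP.
have [x [hx hxe]] : exists x, P x /\ forall v, P v -> aplus x v = forma uh v.
  apply: (fd_dual aplus_lin1 aplus_lin2 hPe).
    by move=> c v v'; rewrite forma_lin2.
  move=> z hz h0; apply: hnorm_eq0.
  have := aplus_coer z; rewrite h0 // (cabsR 0) normr0 => hc.
  have : hnorm z ^+ 2 <= 0 by rewrite -(pmulr_rle0 _ hG1).
  have := hnorm_ge0 z; nra.
have x0 : x != 0.
  apply: contraNN uh0 => /eqP x0; apply/eqP; apply: hinj => // v hv.
  rewrite -hxe // x0 /aplus forma0l emb0 (ip0l (hip_inner _)) mulr0 addr0 //.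
set f := emb x.
have f0 : f != 0 := embnz x0.
have [w hw] := solve_exists hA f.
have hfpos : 0 < hnorm f.
  rewrite lt_def hnorm_ge0 andbT; apply/eqP => /hnorm_eq0 /eqP; exact/negP.
have hwA : hnorm w <= Ainv_norm S * hnorm f.
  rewrite -ler_pdivrMr //; exact: (opnorm_ub hA (T := id)).
have hwP : hnorm (w - Pi w) <= C3 * K2 * hnorm f.
  rewrite -ler_pdivrMr //; apply: le_trans ho.
  exact: (opnorm_ub hA (T := fun u => u - Pi u) (proj_le hPi)).
have [wh [hwh hwhe]] : exists wh, P wh /\ forall v, P v -> forma wh v = forma w v.
  apply: (fd_dual (@forma_lin1 _ S) (@forma_lin2 _ S) hPe) => //.
  by move=> c v v'; rewrite forma_lin2.
have herr : hnorm (w - wh) <= D * Ainv_norm S * hnorm f.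
  apply: le_trans (hq hwh _) _.
    by move=> vh hvh; rewrite formaB1 hwhe // subrr.
  apply: le_trans (ler_wpM2l hC2K1 hwP) _.
  by rewrite mulrA ler_wpM2r // ltW.
have hAn : 0 <= Ainv_norm S.
  have := hnorm_ge0 w => h; apply: (le_trans _ (opnorm_ub hA (T := id) (fun u => lexx _) f0 hw)).
  by rewrite divr_ge0 // ltW.
have hwhn : hnorm wh <= (1 + D) * Ainv_norm S * hnorm x.
  have -> : wh = w - (w - wh) by rewrite opprB addrC subrK.
  apply: le_trans (hnormB _ _) _.
  apply: le_trans (lerD hwA herr) _.
  rewrite -mulrDl [(1 + D) * _]mulrDl mul1r; apply: ler_wpM2l.
    by rewrite addr_ge0 // mulr_ge0.
  exact: emb_norm.
have huhe : uh = x + CG2%:C *: wh.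
  apply/eqP; rewrite eq_sym -subr_eq0; apply/eqP.
  have hP1 : P (x + CG2%:C *: wh - uh) by apply: PB => //; rewrite addrC; apply: PD.
  apply: (hinj _ hP1).
  move=> v hv; rewrite formaB1 -hxe // /aplus formaD1 formaZ1 hwhe // (hw v).
  by rewrite subrr.
have huhn : hnorm uh <= (1 + CG2 * (1 + D) * Ainv_norm S) * hnorm x.
  rewrite huhe; apply: le_trans (hnormD _ _) _.
  rewrite hnormZ cabsR ger0_norm; last exact: ltW.
  rewrite mulrDl mul1r lerD2l -!mulrA.
  apply: ler_wpM2l; first exact: ltW.
  by rewrite mulrA.
have hxpos : 0 < hnorm x.
  rewrite lt_def hnorm_ge0 andbT; apply/eqP => /hnorm_eq0 /eqP; exact/negP.
have huhpos : 0 < hnorm uh.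
  rewrite lt_def hnorm_ge0 andbT; apply/eqP => /hnorm_eq0 /eqP; exact/negP.
set K := 1 + CG2 * (1 + D) * Ainv_norm S in huhn *.
have hK : 0 < K.
  rewrite /K; have := mulr_ge0 (mulr_ge0 (ltW hG2) (addr_ge0 ler01 hD)) hAn; lra.
have hr : CG1 / K <= cabs (forma uh x) / (hnorm uh * hnorm x).
  rewrite -hxe // ler_pdivlMr ?mulr_gt0 //.
  apply: le_trans (aplus_coer x).
  rewrite mulrC mulrA ler_pdivrMr // expr2.
  have h := ler_wpM2r (mulr_ge0 (ltW hG1) (ltW hxpos)) huhn.
  by apply: le_trans (le_trans _ h) _; rewrite le_eqVlt; apply/orP; left; apply/eqP; ring.
have -> : 1 / ((CG1)^-1 * K) = CG1 / K.
  by rewrite invfM invrK mul1r mulrC.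
apply: le_trans hr _.
apply: ub_le_sup; last by exists x; split.
have [Ma [hMa hMa2]] := forma_bound S.
exists Ma => r [v [hv v0 ->]].
have hvpos : 0 < hnorm v.
  rewrite lt_def hnorm_ge0 andbT; apply/eqP => /hnorm_eq0 /eqP; exact/negP.
by rewrite ler_pdivrMr ?mulr_gt0 // mulrA.
Qed.
End Main3.
Section Bound.
Variable R : realType.

Lemma X_le (X : R) n : (0 < n)%N -> 0 <= X -> X <= 1 + X ^+ n.
Proof.
move=> hn hX; have [h1|h1] := leP X 1.
  have := exprn_ge0 n hX; lra.
have := ler_eXnr hn (ltW h1); lra.
Qed.

Lemma bound_lemma (X A c eps : R) (p : nat) : (0 < p)%N -> 0 < X -> 0 < c -> c <= A ->
  0 < eps -> X ^+ (2 * p) * A <= eps ->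
  (1 + X ^+ p * A) * (X + X ^+ p * A) <=
  ((1 + eps / c) / c + 1 + eps / c + (1 + eps / c) * (1 + eps / c) + eps) * A.
Proof.
move=> hp hX hc hcA he hXA.
have hA : 0 < A := lt_le_trans hc hcA.
set y := X ^+ p.
have hy : 0 <= y by rewrite exprn_ge0 // ltW.
have hy2 : y ^+ 2 * A <= eps by rewrite /y -exprM mulnC.
have hyA : y * A <= A + eps.
  have h1 : (y * A) ^+ 2 <= eps * A.
    by rewrite exprMn expr2 mulrA ler_wpM2r // ?ltW // -expr2.
  nra.
have hX2 : X ^+ (2 * p) <= eps / c.
  rewrite ler_pdivlMr //; apply: le_trans hXA; apply: ler_wpM2l => //.
  by rewrite exprn_ge0 // ltW.
have hXQ : X <= 1 + eps / c.
  have h2p : (0 < 2 * p)%N by rewrite muln_gt0.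
  have := X_le h2p (ltW hX); lra.
set Q := 1 + eps / c in hXQ *.
have hec : 0 <= eps / c by rewrite divr_ge0 // ltW.
have hAc : 1 <= A / c by rewrite ler_pdivlMr // mul1r.
have t1 : X <= Q / c * A.
  rewrite mulrAC -mulrA; apply: le_trans hXQ _.
  rewrite -{1}[Q]mulr1; apply: ler_wpM2l; [rewrite /Q; lra | exact: hAc].
have t2 : y * A <= (1 + eps / c) * A.
  apply: le_trans hyA _; rewrite mulrDl mul1r lerD2l mulrAC -{1}[eps]mulr1.
  rewrite -mulrA; apply: ler_wpM2l; [exact: ltW | exact: hAc].
have t3 : X * (y * A) <= Q * (1 + eps / c) * A.
  rewrite -mulrA; apply: ler_pM => //; first exact: ltW.
  by rewrite mulr_ge0 // ltW.
have t4 : (y * A) * (y * A) <= eps * A.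
  by rewrite -expr2 exprMn expr2 mulrA ler_wpM2r // ?ltW // -expr2.
have -> : (1 + y * A) * (X + y * A) = X + y * A + X * (y * A) + (y * A) * (y * A) by ring.
have -> : (Q / c + 1 + eps / c + Q * (1 + eps / c) + eps) * A =
  Q / c * A + (1 + eps / c) * A + Q * (1 + eps / c) * A + eps * A by rewrite /Q; ring.
lra.
Qed.
End Bound.

Local Close Scope complex_scope.
Theorem corollary4p10 (R : realType)
  (S : R -> setting R)                       (* all objects for wavenumber k *)
  (CG1 CG2 : R -> R)                         (* Gårding constants, for each k *)
  (hS : forall k, 0 < k -> garding (S k) (CG1 k) (CG2 k))
  (hinv : forall k, 0 < k -> A_invertible (S k))
  (hlow : forall k0 : R, 0 < k0 -> exists c : R, 0 < c /\
            forall k, k0 <= k -> c <= Ainv_norm (S k))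
  (p : nat) (hp : (0 < p)%N)
  (Hh : forall k : R, R -> set (sH (S k)))   (* the spaces H_h *)
  (hHh : forall k h, 0 < k -> 0 < h -> fin_dim_subspace (Hh k h))
  (Pi : forall k : R, R -> sH (S k) -> sH (S k))
  (hPi : forall k h, 0 < k -> 0 < h -> orth_proj (Hh k h) (Pi k h))
  (C1 C2 C3 : R) (hC1 : 0 < C1) (hC2 : 0 < C2) (hC3 : 0 < C3)
  (hyp : forall k h, 0 < k -> 0 < h ->
     (k * h) ^+ (2 * p) * Ainv_norm (S k) <= C1 ->
     (forall (u uh : sH (S k)), Hh k h uh ->
        (forall vh, Hh k h vh -> forma (u - uh) vh = 0) ->
        hnorm (u - uh) <=
          C2 * (1 + (k * h) ^+ p * Ainv_norm (S k)) * hnorm (u - Pi k h u)) /\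
     opnorm_Ainv (fun u => u - Pi k h u) <=
       C3 * (k * h + (k * h) ^+ p * Ainv_norm (S k))) :
  forall k0 : R, 0 < k0 ->
  forall eps : R, 0 < eps -> eps <= C1 ->
  exists C4 : R, 0 < C4 /\
    forall k h, k0 <= k -> 0 < h ->
      (k * h) ^+ (2 * p) * Ainv_norm (S k) <= eps ->
      forall uh, Hh k h uh -> uh != 0 ->
        1 / ((CG1 k)^-1 * (1 + CG2 k * (1 + C2 * C3 * C4) * Ainv_norm (S k)))
          <= infsup_inner (Hh k h) uh.
Proof.
move=> k0 hk0 eps heps heC1.
have [c [hc hcA]] := hlow k0 hk0.
have hC4 : 0 < (1 + eps / c) / c + 1 + eps / c + (1 + eps / c) * (1 + eps / c) + eps.
  have hec : 0 <= eps / c by rewrite divr_ge0 // ltW.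
  have : 0 <= (1 + eps / c) / c by rewrite divr_ge0 // ?ltW //; lra.
  have : 0 <= (1 + eps / c) * (1 + eps / c) by rewrite mulr_ge0 //; lra.
  lra.
exists ((1 + eps / c) / c + 1 + eps / c + (1 + eps / c) * (1 + eps / c) + eps); split => //.
move=> k h hk hh hXA uh huh uh0.
have kpos : 0 < k := lt_le_trans hk0 hk.
have hAk := hcA k hk.
have [hq ho] := hyp k h kpos hh (le_trans hXA heC1).
have hX : 0 < k * h by rewrite mulr_gt0.
have hA : 0 <= Ainv_norm (S k) by apply: le_trans (ltW hc) hAk.
have hb := bound_lemma hp hX hc hAk heps hXA.
apply: (main_step (hS k kpos) (hinv k kpos) (hHh k h kpos hh) (hPi k h kpos hh)
         (K2 := k * h + (k * h) ^+ p * Ainv_norm (S k)) _ hq ho).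
- by rewrite !mulr_ge0 // ltW.
- rewrite mulrACA -mulrA -[C2 * C3 * _ * _]mulrA mulrA; apply: ler_wpM2l.
    by rewrite mulr_ge0 // ltW.
  exact: hb.
- apply: mulr_ge0; first exact: ltW.
  by rewrite addr_ge0 // mulr_ge0 // exprn_ge0 // ltW.
- exact: huh.
- exact: uh0.
Qed.
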